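(* For the black-bounce Kerr--Newman spacetime (metric in the context), define the antisymmetric tensor $f_{\mu\nu}$ in coordinates $(t,r,\theta,\phi)$ by the nonzero components $$f_{tr}=-f_{rt}=-a\cos\theta,\quad f_{r\phi}=-f_{\phi r}=-a^2\cos\theta\sin^2\theta,$$ $$f_{t\theta}=-f_{\theta t}=a\sqrt{r^2+\ell^2}\sin\theta,\quad f_{\theta\phi}=-f_{\phi\theta}=\sqrt{r^2+\ell^2}\,\sin\theta\,(r^2+\ell^2+a^2).$$ Then $f_{\mu\alpha}f^{\alpha}{}_{\nu}=K_{\mu\nu}$, where $K_{\mu\nu}$ is the Killing tensor defined in the context, but for $\ell\neq0$ (and $a\ne 0$) $f_{\mu\nu}$ is not a Killing--Yano tensor: $f_{\mu(\nu;\alpha)}\neq0$.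
   Context: The black-bounce Kerr--Newman spacetime is $$\mathrm{d}s^2=-\frac{\Delta}{\rho^2}(a\sin^2\theta\,\mathrm{d}\phi-\mathrm{d}t)^2+\frac{\sin^2\theta}{\rho^2}\big[(r^2+\ell^2+a^2)\mathrm{d}\phi-a\,\mathrm{d}t\big]^2+\frac{\rho^2}{\Delta}\mathrm{d}r^2+\rho^2\mathrm{d}\theta^2,$$ with $\rho^2=r^2+\ell^2+a^2\cos^2\theta$, $\Delta=r^2+\ell^2+a^2-2m\sqrt{r^2+\ell^2}+Q^2$. The Killing tensor is $K_{\mu\nu}=\rho^2(l_\mu n_\nu+l_\nu n_\mu)+(r^2+\ell^2)g_{\mu\nu}$ with $l^\mu=\big(\frac{r^2+\ell^2+a^2}{\Delta},1,0,\frac{a}{\Delta}\big)$ and $n^\mu=\frac{1}{2\rho^2}(r^2+\ell^2+a^2,-\Delta,0,a)$. Indices are raised/lowered with this metric. *)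

(* Defs.v *)
From HB Require Import structures.
From mathcomp Require Import all_boot all_order all_algebra.
From mathcomp Require Import all_classical all_reals all_analysis.
Set Implicit Arguments. Unset Strict Implicit. Unset Printing Implicit Defensive.
Import Order.TTheory GRing.Theory Num.Theory.
Local Open Scope ring_scope.

(* Coordinates x : 'I_4 -> R with x 0 = t, x 1 = r, x 2 = theta, x 3 = phi. *)
Section BBKN.
Variable R : realType.
Variables m a l Q : R.

Definition it : 'I_4 := @Ordinal 4 0 isT.
Definition ir : 'I_4 := @Ordinal 4 1 isT.
Definition ith : 'I_4 := @Ordinal 4 2 isT.
Definition iph : 'I_4 := @Ordinal 4 3 isT.

Definition crd (x : 'I_4 -> R) := x ir.
Definition cth (x : 'I_4 -> R) := x ith.

Definition rho2 (x : 'I_4 -> R) : R := (crd x)^+2 + l^+2 + a^+2 * (cos (cth x))^+2.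
Definition Delta (x : 'I_4 -> R) : R :=
  (crd x)^+2 + l^+2 + a^+2 - 2 * m * Num.sqrt ((crd x)^+2 + l^+2) + Q^+2.

Definition w1 (x : 'I_4 -> R) (i : 'I_4) : R :=
  if i == it then -1 else if i == iph then a * (sin (cth x))^+2 else 0.
Definition w2 (x : 'I_4 -> R) (i : 'I_4) : R :=
  if i == it then - a else if i == iph then (crd x)^+2 + l^+2 + a^+2 else 0.

Definition gmet (x : 'I_4 -> R) : 'M[R]_4 :=
  \matrix_(i, j)
    (- (Delta x / rho2 x) * w1 x i * w1 x j
     + ((sin (cth x))^+2 / rho2 x) * w2 x i * w2 x j
     + (if (i == ir) && (j == ir) then rho2 x / Delta x else 0)
     + (if (i == ith) && (j == ith) then rho2 x else 0)).

Definition ginv (x : 'I_4 -> R) : 'M[R]_4 := invmx (gmet x).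

Definition lup (x : 'I_4 -> R) (i : 'I_4) : R :=
  if i == it then ((crd x)^+2 + l^+2 + a^+2) / Delta x
  else if i == ir then 1
  else if i == ith then 0 else a / Delta x.
Definition nup (x : 'I_4 -> R) (i : 'I_4) : R :=
  (2 * rho2 x)^-1 *
  (if i == it then (crd x)^+2 + l^+2 + a^+2
   else if i == ir then - Delta x
   else if i == ith then 0 else a).
Definition ldown (x : 'I_4 -> R) (i : 'I_4) : R := \sum_(j < 4) gmet x i j * lup x j.
Definition ndown (x : 'I_4 -> R) (i : 'I_4) : R := \sum_(j < 4) gmet x i j * nup x j.

Definition Kil (x : 'I_4 -> R) (i j : 'I_4) : R :=
  rho2 x * (ldown x i * ndown x j + ldown x j * ndown x i)
  + ((crd x)^+2 + l^+2) * gmet x i j.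

Definition fpart (x : 'I_4 -> R) (i j : 'I_4) : R :=
  if (i == it) && (j == ir) then - a * cos (cth x)
  else if (i == ir) && (j == iph) then - a^+2 * cos (cth x) * (sin (cth x))^+2
  else if (i == it) && (j == ith) then a * Num.sqrt ((crd x)^+2 + l^+2) * sin (cth x)
  else if (i == ith) && (j == iph) then
    Num.sqrt ((crd x)^+2 + l^+2) * sin (cth x) * ((crd x)^+2 + l^+2 + a^+2)
  else 0.
Definition fKY (x : 'I_4 -> R) (i j : 'I_4) : R := fpart x i j - fpart x j i.

Definition upd (x : 'I_4 -> R) (al : 'I_4) (s : R) : 'I_4 -> R :=
  fun i => if i == al then s else x i.
Definition partial (F : ('I_4 -> R) -> R) (al : 'I_4) (x : 'I_4 -> R) : R :=
  derive1 (fun s => F (upd x al s)) (x al).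

Definition Gamma (x : 'I_4 -> R) (lam mu nu : 'I_4) : R :=
  2^-1 * \sum_(s < 4) ginv x lam s *
    (partial (fun y => gmet y s nu) mu x + partial (fun y => gmet y s mu) nu x
     - partial (fun y => gmet y mu nu) s x).

Definition covf (x : 'I_4 -> R) (mu nu al : 'I_4) : R :=
  partial (fun y => fKY y mu nu) al x
  - \sum_(lam < 4) Gamma x lam al mu * fKY x lam nu
  - \sum_(lam < 4) Gamma x lam al nu * fKY x mu lam.

(* twice the symmetrization  f_{mu (nu ; al)} *)
Definition covf_sym (x : 'I_4 -> R) (mu nu al : 'I_4) : R :=
  covf x mu nu al + covf x mu al nu.

(* points where the metric is regular in these coordinates *)
Definition inDomain (x : 'I_4 -> R) : Prop :=
  Delta x != 0 /\ rho2 x != 0 /\ sin (cth x) != 0.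

End BBKN.

(* Main.v *)
Require Import Defs.
From HB Require Import structures.
From mathcomp Require Import all_boot all_order all_algebra.
From mathcomp Require Import all_classical all_reals all_analysis.
From mathcomp Require Import ring lra.
Import Order.TTheory GRing.Theory Num.Theory.
Local Open Scope ring_scope.
Section S.
Variable R : realType.
Variables m a l Q : R.

Lemma circ_param (s c : R) : s^+2 + c^+2 = 1 -> s != 0 ->
  exists t : R, s = 2*t/(1+t^+2) /\ c = (1-t^+2)/(1+t^+2).
Proof.
move=> h hs.
have hc : 1 + c != 0.
  apply/negP => /eqP hc. have ec : c = -1 by lra.
  move: h; rewrite ec => h.
  have : s^+2 = 0 by nra.
  by move/eqP; rewrite sqrf_eq0 (negbTE hs).
have key : (1+c)^+2 + s^+2 = 2*(1+c) by nra.
exists (s/(1+c)).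
have ht : 1 + (s/(1+c))^+2 = 2/(1+c).
  rewrite expr_div_n. apply: (@mulIf _ ((1+c)^+2)); first by rewrite sqrf_eq0.
  rewrite mulrDl divfK ?sqrf_eq0 // mul1r key. by field.
have es : s^+2 = 2*(1+c) - (1+c)^+2 by lra.
rewrite ht; split; first by field.
rewrite expr_div_n es; field; done.
Qed.
Definition W1 x (i : 'I_4) : R :=
  if i == it then a * (sin (cth x))^+2 else if i == iph then 1 else 0.
Definition W2 x (i : 'I_4) : R :=
  if i == it then (crd x)^+2 + l^+2 + a^+2 else if i == iph then a else 0.
Definition Gi x : 'M[R]_4 := \matrix_(i, j)
  ((rho2 a l x)^-1 * (- (Delta m a l Q x)^-1 * W2 x i * W2 x j
     + ((sin (cth x))^+2)^-1 * W1 x i * W1 x j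
     + (if (i == ir) && (j == ir) then Delta m a l Q x else 0)
     + (if (i == ith) && (j == ith) then 1 else 0))).

Lemma gmet_Gi x : inDomain m a l Q x -> gmet m a l Q x *m Gi x = 1%:M.
Proof.
rewrite /inDomain /rho2 /Delta /crd /cth => -[hD [hr hs]].
apply/matrixP => i j; rewrite !mxE !big_ord_recr big_ord0 /= add0r /gmet /Gi !mxE.
rewrite /rho2 /Delta /W1 /W2 /w1 /w2 /crd /cth.
have hP : 0 <= x ir ^+ 2 + l ^+ 2 by rewrite addr_ge0 // sqr_ge0.
have hq := sqr_sqrtr hP.
have hsc := cos2Dsin2 (x ith).
move: hD hr hs hq hsc.
move: (Num.sqrt _) => q. move: (x ir ^+ 2 + l ^+ 2) => P.
move: (sin _) (cos _) => s c hD hr hs hq hsc.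
rewrite -hq. rewrite -hq in hD hr.
have [t [es ec]] : exists t, s = 2*t/(1+t^+2) /\ c = (1-t^+2)/(1+t^+2).
  by apply: circ_param => //; rewrite addrC.
subst c s.
have h1 : 1 + t^+2 != 0 by rewrite lt0r_neq0 // ltr_pwDl // sqr_ge0.
have ht : t != 0 by apply/eqP => et; move: hs; rewrite et mulr0 mul0r eqxx.
have hr' : (q * (1 + t ^+ 2)) ^+ 2 + (a * (1 - t ^+ 2)) ^+ 2 != 0.
  have e : q ^+ 2 + a ^+ 2 * ((1 - t ^+ 2) / (1 + t ^+ 2)) ^+ 2 =
    ((q * (1 + t ^+ 2)) ^+ 2 + (a * (1 - t ^+ 2)) ^+ 2) / (1 + t^+2)^+2 by field.
  by move: hr; rewrite e mulf_eq0 negb_or => /andP[].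
case: i => [[|[|[|[|//]]]] Hi]; case: j => [[|[|[|[|//]]]] Hj]; rewrite /=.
all: by field; rewrite h1 ht hD hr'.
Qed.

Lemma ginvE x : inDomain m a l Q x -> ginv m a l Q x = Gi x.
Proof.
move=> hx; have h := gmet_Gi x hx; have [hu _] := mulmx1_unit h.
by rewrite /ginv -[invmx _]mulmx1 -h mulmxA mulVmx // mul1mx.
Qed.

Lemma part1 x : inDomain m a l Q x ->
     forall mu nu : 'I_4,
       \sum_(al < 4) \sum_(be < 4)
          fKY a l x mu al * ginv m a l Q x al be * fKY a l x nu be
       = Kil m a l Q x mu nu.
Proof.
move=> hx mu nu; rewrite ginvE //.
move: hx; rewrite /inDomain /Kil /ldown /ndown /lup /nup /fKY /fpart => -[hD [hr hs]].
rewrite !big_ord_recr !big_ord0 /= !add0r /gmet /Gi !mxE.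
move: hD hr hs; rewrite /rho2 /Delta /W1 /W2 /w1 /w2 /crd /cth => hD hr hs.
have hP : 0 <= x ir ^+ 2 + l ^+ 2 by rewrite addr_ge0 // sqr_ge0.
have hq := sqr_sqrtr hP.
have hsc := cos2Dsin2 (x ith).
move: hD hr hs hq hsc.
move: (Num.sqrt _) => q. move: (x ir ^+ 2 + l ^+ 2) => P.
move: (sin _) (cos _) => s c hD hr hs hq hsc.
rewrite -hq. rewrite -hq in hD hr.
have [t [es ec]] : exists t, s = 2*t/(1+t^+2) /\ c = (1-t^+2)/(1+t^+2).
  by apply: circ_param => //; rewrite addrC.
subst c s.
have h1 : 1 + t^+2 != 0 by rewrite lt0r_neq0 // ltr_pwDl // sqr_ge0.
have ht : t != 0 by apply/eqP => et; move: hs; rewrite et mulr0 mul0r eqxx.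
have hr' : (q * (1 + t ^+ 2)) ^+ 2 + (a * (1 - t ^+ 2)) ^+ 2 != 0.
  have e : q ^+ 2 + a ^+ 2 * ((1 - t ^+ 2) / (1 + t ^+ 2)) ^+ 2 =
    ((q * (1 + t ^+ 2)) ^+ 2 + (a * (1 - t ^+ 2)) ^+ 2) / (1 + t^+2)^+2 by field.
  by move: hr; rewrite e mulf_eq0 negb_or => /andP[].
case: mu => [[|[|[|[|//]]]] Hi]; case: nu => [[|[|[|[|//]]]] Hj]; rewrite /=.
all: try by field; rewrite ?h1 ?ht ?hD ?hr'.
Qed.

Lemma dP (r : R) : is_derive r 1 (fun s : R => s^+2 + l^+2) (2*r).
Proof. by apply: is_derive_eq; rewrite /GRing.scale /=; ring. Qed.

Lemma Ppos (r : R) : l != 0 -> 0 < r^+2 + l^+2.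
Proof. by move=> hl; rewrite ltr_wpDl ?sqr_ge0 // lt0r sqr_ge0 andbT sqrf_eq0. Qed.
Lemma dq (r : R) : l != 0 ->
  is_derive r 1 (fun s => Num.sqrt (s^+2 + l^+2)) (r / Num.sqrt (r^+2+l^+2)).
Proof.
move=> hl; have hP := Ppos r hl.
have hs := is_derive1_sqrt hP.
have hc := @is_derive1_comp R Num.sqrt (fun s => s^+2 + l^+2) r _ _ hs (dP r).
apply: is_derive_eq hc _.
have hq : Num.sqrt (r^+2 + l^+2) != 0 by rewrite sqrtr_eq0 -ltNge.
by field.
Qed.

Definition x0 (r : R) : 'I_4 -> R :=
  fun i => if i == ir then r else if i == ith then pi/2 else 0.

Lemma partialE (F : ('I_4 -> R) -> R) (al : 'I_4) (x : 'I_4 -> R) (v : R) :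
  is_derive (x al) 1 (fun s => F (upd x al s)) v -> partial F al x = v.
Proof. by move=> h; rewrite /partial derive1E; exact: derive_val. Qed.

Lemma partial_cst (F : ('I_4 -> R) -> R) (al : 'I_4) (x : 'I_4 -> R) :
  (forall s, F (upd x al s) = F x) -> partial F al x = 0.
Proof.
move=> h; rewrite /partial.
have -> : (fun s => F (upd x al s)) = cst (F x) by apply/funext => s; exact: h.
exact: derive1_cst.
Qed.

Lemma pgt x i j : partial (fun y => gmet m a l Q y i j) it x = 0.
Proof. by apply: partial_cst => s; rewrite /gmet !mxE /rho2 /Delta /w1 /w2 /crd /cth /upd /=. Qed.
Lemma pgp x i j : partial (fun y => gmet m a l Q y i j) iph x = 0.
Proof. by apply: partial_cst => s; rewrite /gmet !mxE /rho2 /Delta /w1 /w2 /crd /cth /upd /=. Qed.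

Lemma g_thr y : gmet m a l Q y ith ir = 0.
Proof. by rewrite /gmet !mxE /w1 /w2 /=; ring. Qed.
Lemma g_rth y : gmet m a l Q y ir ith = 0.
Proof. by rewrite /gmet !mxE /w1 /w2 /=; ring. Qed.

Lemma partial0 (F : ('I_4 -> R) -> R) (al : 'I_4) (x : 'I_4 -> R) : (forall y, F y = 0) -> partial F al x = 0.
Proof. by move=> h; apply: partial_cst => s; rewrite !h. Qed.

Lemma sum4 (F : 'I_4 -> R) : \sum_(i < 4) F i = F it + F ir + F ith + F iph.
Proof.
by rewrite !big_ord_recr big_ord0 /= add0r; congr (_ + _ + _ + _); congr F; apply: val_inj.
Qed.

Lemma D1 r : partial (fun y => gmet m a l Q y ith ith) ir (x0 r) = 2 * r.
Proof.
apply: partialE.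
have -> : (fun s => gmet m a l Q (upd (x0 r) ir s) ith ith) = fun s => s^+2 + l^+2.
  apply/funext => s; rewrite /gmet !mxE /rho2 /w1 /w2 /crd /cth /upd /x0 /= cos_pihalf; ring.
exact: dP.
Qed.

Lemma D2 r : l != 0 ->
  partial (fun y => gmet m a l Q y it it) ir (x0 r) =
  - 2 * m * r / (Num.sqrt (r^+2+l^+2))^+3 + 2 * Q^+2 * r / (r^+2+l^+2)^+2.
Proof.
move=> hl; apply: partialE.
have -> : (fun s => gmet m a l Q (upd (x0 r) ir s) it it) =
   fun s => 2 * m * (Num.sqrt(s^+2+l^+2))^-1 - 1 - Q^+2 * (s^+2+l^+2)^-1.
  apply/funext => s; rewrite /gmet !mxE /rho2 /Delta /w1 /w2 /crd /cth /upd /x0 /=.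
  rewrite cos_pihalf sin_pihalf.
  have hP := Ppos s hl.
  have hqq := sqr_sqrtr (ltW hP).
  have hq : Num.sqrt (s^+2 + l^+2) != 0 by rewrite sqrtr_eq0 -ltNge.
  move: (Num.sqrt _) hqq hq => q hqq hq. rewrite -hqq.
  by field.
have hP := Ppos r hl.
have hq : Num.sqrt (r^+2 + l^+2) != 0 by rewrite sqrtr_eq0 -ltNge.
have hv1 := @is_deriveV R (fun s => Num.sqrt (s^+2+l^+2)) r _ 1 hq (dq r hl).
have hv2 := @is_deriveV R (fun s => s^+2+l^+2) r _ 1 (lt0r_neq0 hP) (dP r).
rewrite /=. apply: is_derive_eq. rewrite /GRing.scale /=.
by field; rewrite hq (lt0r_neq0 hP).
Qed.

Lemma D3 r : l != 0 ->
  partial (fun y => gmet m a l Q y iph it) ir (x0 r) =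
  - 2 * a * Q^+2 * r / (r^+2+l^+2)^+2 + 2 * m * a * r / (Num.sqrt (r^+2+l^+2))^+3.
Proof.
move=> hl; apply: partialE.
have -> : (fun s => gmet m a l Q (upd (x0 r) ir s) iph it) =
   fun s => a * Q^+2 * (s^+2+l^+2)^-1 - 2 * m * a * (Num.sqrt(s^+2+l^+2))^-1.
  apply/funext => s; rewrite /gmet !mxE /rho2 /Delta /w1 /w2 /crd /cth /upd /x0 /=.
  rewrite cos_pihalf sin_pihalf.
  have hP := Ppos s hl.
  have hqq := sqr_sqrtr (ltW hP).
  have hq : Num.sqrt (s^+2 + l^+2) != 0 by rewrite sqrtr_eq0 -ltNge.
  move: (Num.sqrt _) hqq hq => q hqq hq. rewrite -hqq.
  by field.
have hP := Ppos r hl.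
have hq : Num.sqrt (r^+2 + l^+2) != 0 by rewrite sqrtr_eq0 -ltNge.
have hv1 := @is_deriveV R (fun s => Num.sqrt (s^+2+l^+2)) r _ 1 hq (dq r hl).
have hv2 := @is_deriveV R (fun s => s^+2+l^+2) r _ 1 (lt0r_neq0 hP) (dP r).
rewrite /=. apply: is_derive_eq. rewrite /GRing.scale /=.
by field; rewrite hq (lt0r_neq0 hP).
Qed.

Lemma D4 r : partial (fun y => fKY a l y it ir) ith (x0 r) = a.
Proof.
apply: partialE.
have -> : (fun s => fKY a l (upd (x0 r) ith s) it ir) = fun s => - a * cos s.
  by apply/funext => s; rewrite /fKY /fpart /cth /upd /x0 /= subr0.
rewrite /=. apply: is_derive_eq. rewrite /GRing.scale /= sin_pihalf.
by rewrite mulrN1 opprK.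
Qed.

Lemma D5 r : l != 0 -> partial (fun y => fKY a l y it ith) ir (x0 r) =
  a * (r / Num.sqrt (r^+2+l^+2)).
Proof.
move=> hl; apply: partialE.
have -> : (fun s => fKY a l (upd (x0 r) ir s) it ith) = fun s => a * Num.sqrt (s^+2+l^+2).
  by apply/funext => s; rewrite /fKY /fpart /crd /cth /upd /x0 /= sin_pihalf subr0 mulr1.
have := dq r hl.
by rewrite /=; move=> h; apply: is_derive_eq.
Qed.

Lemma dom0 r : l != 0 -> Delta m a l Q (x0 r) != 0 -> inDomain m a l Q (x0 r).
Proof.
move=> hl hD; split => //; split.
  by rewrite /rho2 /crd /cth /x0 /= cos_pihalf expr0n /= mulr0 addr0 lt0r_neq0 // Ppos.
by rewrite /cth /x0 /= sin_pihalf oner_neq0.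
Qed.

Lemma covf_val r : l != 0 -> Delta m a l Q (x0 r) != 0 ->
  covf_sym m a l Q (x0 r) it ir ith = a * (1 - r / Num.sqrt (r^+2+l^+2)).
Proof.
move=> hl hD; have hdom := dom0 r hl hD.
rewrite /covf_sym /covf /Gamma !sum4 ginvE //.
rewrite D1 (D2 _ hl) (D3 _ hl) D4 (D5 _ hl) !pgt !pgp.
have e1 := @partial0 (fun y => gmet m a l Q y ith ir) ith (x0 r) g_thr.
have e2 := @partial0 (fun y => gmet m a l Q y ir ith) ith (x0 r) g_rth.
rewrite e1 e2.
rewrite /Gi !mxE /W1 /W2 /fKY /fpart /rho2 /Delta /crd /cth /x0 /= cos_pihalf sin_pihalf.
have hP := Ppos r hl.
have hqq := sqr_sqrtr (ltW hP).
have hq : Num.sqrt (r^+2 + l^+2) != 0 by rewrite sqrtr_eq0 -ltNge.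
move: hD; rewrite /Delta /crd /x0 /= => hD.
move: (Num.sqrt _) hqq hq hD => q hqq hq hD. rewrite -hqq. rewrite -hqq in hD.
by field; rewrite hq hD.
Qed.

Lemma three_roots (q1 q2 q3 mm c : R) :
  q1^+2 - 2 * mm * q1 + c = 0 -> q2^+2 - 2 * mm * q2 + c = 0 -> q3^+2 - 2 * mm * q3 + c = 0 ->
  q1 != q2 -> q1 != q3 -> q2 != q3 -> False.
Proof.
move=> h1 h2 h3 n12 n13 n23.
have e12 : (q1 - q2) * (q1 + q2 - 2 * mm) = (q1^+2 - 2 * mm * q1 + c) - (q2^+2 - 2 * mm * q2 + c) by ring.
have e13 : (q1 - q3) * (q1 + q3 - 2 * mm) = (q1^+2 - 2 * mm * q1 + c) - (q3^+2 - 2 * mm * q3 + c) by ring.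
rewrite h1 h2 subrr in e12; rewrite h1 h3 subrr in e13.
move/eqP: e12; rewrite mulf_eq0 subr_eq0 (negbTE n12) /= => /eqP e12.
move/eqP: e13; rewrite mulf_eq0 subr_eq0 (negbTE n13) /= => /eqP e13.
have : q2 = q3 by lra.
by move/eqP; rewrite (negbTE n23).
Qed.

Lemma exists_r : l != 0 -> exists r, Delta m a l Q (x0 r) != 0.
Proof.
move=> hl.
case: (eqVneq (Delta m a l Q (x0 0)) 0) => [h1|h]; last by exists 0.
case: (eqVneq (Delta m a l Q (x0 l)) 0) => [h2|h]; last by exists l.
case: (eqVneq (Delta m a l Q (x0 (2 * l))) 0) => [h3|h]; last by exists (2 * l).
exfalso; move: h1 h2 h3; rewrite /Delta /crd /x0 /=.
have hl2 : 0 < l^+2 by rewrite lt0r sqr_ge0 andbT sqrf_eq0.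
have p1 := sqr_sqrtr (ltW (Ppos 0 hl)).
have p2 := sqr_sqrtr (ltW (Ppos l hl)).
have p3 := sqr_sqrtr (ltW (Ppos (2 * l) hl)).
move: (Num.sqrt (0 ^+ 2 + l ^+ 2)) p1 => q1 p1.
move: (Num.sqrt (l ^+ 2 + l ^+ 2)) p2 => q2 p2.
move: (Num.sqrt ((2 * l) ^+ 2 + l ^+ 2)) p3 => q3 p3.
rewrite -p1 -p2 -p3 => h1 h2 h3.
apply: (@three_roots q1 q2 q3 m (a^+2 + Q^+2)).
- by rewrite -h1; ring.
- by rewrite -h2; ring.
- by rewrite -h3; ring.
- apply/eqP => e; move: p1 p2; rewrite e => -> /eqP; rewrite -subr_eq0.
  have -> : 0 ^+ 2 + l ^+ 2 - (l ^+ 2 + l ^+ 2) = - l^+2 by ring.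
  by rewrite oppr_eq0 (negbTE (lt0r_neq0 hl2)).
- apply/eqP => e; move: p1 p3; rewrite e => -> /eqP; rewrite -subr_eq0.
  have -> : 0 ^+ 2 + l ^+ 2 - ((2 * l) ^+ 2 + l ^+ 2) = - (4 * l^+2) by ring.
  by rewrite oppr_eq0 mulf_eq0 (negbTE (lt0r_neq0 hl2)) orbF pnatr_eq0.
- apply/eqP => e; move: p2 p3; rewrite e => -> /eqP; rewrite -subr_eq0.
  have -> : l ^+ 2 + l ^+ 2 - ((2 * l) ^+ 2 + l ^+ 2) = - (3 * l^+2) by ring.
  by rewrite oppr_eq0 mulf_eq0 (negbTE (lt0r_neq0 hl2)) orbF pnatr_eq0.
Qed.

Lemma part2 : l != 0 -> a != 0 ->
  exists x : 'I_4 -> R, inDomain m a l Q x /\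
    exists mu nu al : 'I_4, covf_sym m a l Q x mu nu al != 0.
Proof.
move=> hl ha; have [r hr] := exists_r hl.
exists (x0 r); split; first exact: dom0.
exists it, ir, ith; rewrite covf_val // mulf_neq0 //.
have hP := Ppos r hl.
have hqq := sqr_sqrtr (ltW hP).
have hq : Num.sqrt (r^+2 + l^+2) != 0 by rewrite sqrtr_eq0 -ltNge.
move: (Num.sqrt _) hqq hq => q hqq hq.
apply/eqP => e.
have erq : r = q by move: e => /eqP; rewrite subr_eq0 eq_sym => /eqP /(congr1 (fun z => z * q)); rewrite mul1r divfK.
have hl2 : 0 < l^+2 by rewrite lt0r sqr_ge0 andbT sqrf_eq0.
move: hqq; rewrite -erq => /eqP; rewrite -subr_eq0.
have -> : r ^+ 2 - (r ^+ 2 + l ^+ 2) = - l^+2 by ring.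
by rewrite oppr_eq0 (negbTE (lt0r_neq0 hl2)).
Qed.
End S.

Theorem mainTheorem9 (R : realType) (m a l Q : R) :
  (forall x : 'I_4 -> R, inDomain m a l Q x ->
     forall mu nu : 'I_4,
       \sum_(al < 4) \sum_(be < 4)
          fKY a l x mu al * ginv m a l Q x al be * fKY a l x nu be
       = Kil m a l Q x mu nu)
  /\
  (l != 0 -> a != 0 ->
     exists x : 'I_4 -> R, inDomain m a l Q x /\
       exists mu nu al : 'I_4, covf_sym m a l Q x mu nu al != 0).
Proof. split; [exact: part1 | exact: part2]. Qed.
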